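(* Let $S$ be a monoid with $1\in E\subseteq E(S)$, and let $\cdot:S\times E\to E$ be a function. Then $S$ is a modal left $E$-monoid with left $E$-modal operation $\cdot$ if and only if $E$ is right pre-reduced and for all $e\in E$ and $s,t\in S$: (M1) $e\cdot e=1$; (M2) $s\cdot 1=1$; (M3) $(s\cdot e)s=(s\cdot e)se$; (M4) $(st)\cdot e=s\cdot(t\cdot e)$. Furthermore, $S$ is an inductive left $E$-monoid with associated operation $\cdot$ if and only if (M1)–(M4) hold, $(E,\le_r)$ is a meet-semilattice, and (M5) $s\cdot(e\wedge f)=(s\cdot e)\wedge(s\cdot f)$ for all $s\in S$, $e,f\in E$, where $\wedge$ is the meet in $(E,\le_r)$.
   Context: For a semigroup $S$, $E(S)$ is its set of idempotents; for $e,f\in E(S)$, $e\le_r f$ iff $e=ef$. $E\subseteq E(S)$ is right pre-reduced if $e=ef$ and $f=fe$ imply $e=f$ for $e,f\in E$. Let $S$ be a monoid and $1\in E\subseteq E(S)$. $S$ is a modal left $E$-monoid if $E$ is right pre-reduced and (I1') for all $t\in S$, $e\in E$ there is $t\cdot e\in E$ such that for all $s\in S$: $ste=st$ iff $s(t\cdot e)=s$; the (necessarily unique) resulting map $(t,e)\mapsto t\cdot e$ is the left $E$-modal operation. $S$ is an inductive left $E$-monoid if it is a modal left $E$-monoid, $(E,\le_r)$ is a meet-semilattice with meet $\wedge$, and (I2') for $s\in S$, $e,f\in E$: $se=sf=s$ implies $s(e\wedge f)=s$. *)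

(* Defs.v *)
Definition is_monoid {S : Type} (mul : S -> S -> S) (one : S) : Prop :=
  (forall x y z, mul x (mul y z) = mul (mul x y) z) /\
  (forall x, mul one x = x) /\
  (forall x, mul x one = x).

Definition idempotent {S : Type} (mul : S -> S -> S) (e : S) : Prop :=
  mul e e = e.

Definition le_r {S : Type} (mul : S -> S -> S) (e f : S) : Prop :=
  e = mul e f.

Definition right_pre_reduced {S : Type} (mul : S -> S -> S) (E : S -> Prop) : Prop :=
  forall e f, E e -> E f -> e = mul e f -> f = mul f e -> e = f.

Definition E_setting {S : Type} (mul : S -> S -> S) (one : S) (E : S -> Prop) : Prop :=
  E one /\ (forall e, E e -> idempotent mul e).

(* dot : S x E -> E, encoded as a total map S -> S -> S whose values on
   E-arguments lie in E (values at non-E second arguments are irrelevant). *)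
Definition op_into_E {S : Type} (E : S -> Prop) (dot : S -> S -> S) : Prop :=
  forall t e, E e -> E (dot t e).

Definition I1' {S : Type} (mul : S -> S -> S) (E : S -> Prop) (dot : S -> S -> S) : Prop :=
  forall t e, E e ->
    E (dot t e) /\
    (forall s, mul (mul s t) e = mul s t <-> mul s (dot t e) = s).

Definition modal_left_E_monoid {S : Type} (mul : S -> S -> S) (E : S -> Prop)
    (dot : S -> S -> S) : Prop :=
  right_pre_reduced mul E /\ I1' mul E dot.

Definition meet_semilattice_with {S : Type} (mul : S -> S -> S) (E : S -> Prop)
    (meet : S -> S -> S) : Prop :=
  (forall e, E e -> le_r mul e e) /\
  (forall e f g, E e -> E f -> E g -> le_r mul e f -> le_r mul f g -> le_r mul e g) /\
  (forall e f, E e -> E f -> le_r mul e f -> le_r mul f e -> e = f) /\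
  (forall e f, E e -> E f ->
     E (meet e f) /\ le_r mul (meet e f) e /\ le_r mul (meet e f) f /\
     (forall g, E g -> le_r mul g e -> le_r mul g f -> le_r mul g (meet e f))).

Definition I2' {S : Type} (mul : S -> S -> S) (E : S -> Prop) (meet : S -> S -> S) : Prop :=
  forall s e f, E e -> E f -> mul s e = s -> mul s f = s -> mul s (meet e f) = s.

Definition inductive_left_E_monoid {S : Type} (mul : S -> S -> S) (E : S -> Prop)
    (dot meet : S -> S -> S) : Prop :=
  modal_left_E_monoid mul E dot /\ meet_semilattice_with mul E meet /\ I2' mul E meet.

Definition M1 {S : Type} (one : S) (E : S -> Prop) (dot : S -> S -> S) : Prop :=
  forall e, E e -> dot e e = one.
Definition M2 {S : Type} (one : S) (dot : S -> S -> S) : Prop :=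
  forall s, dot s one = one.
Definition M3 {S : Type} (mul : S -> S -> S) (E : S -> Prop) (dot : S -> S -> S) : Prop :=
  forall s e, E e -> mul (dot s e) s = mul (mul (dot s e) s) e.
Definition M4 {S : Type} (mul : S -> S -> S) (E : S -> Prop) (dot : S -> S -> S) : Prop :=
  forall s t e, E e -> dot (mul s t) e = dot s (dot t e).
Definition M5 {S : Type} (E : S -> Prop) (dot meet : S -> S -> S) : Prop :=
  forall s e f, E e -> E f -> dot s (meet e f) = meet (dot s e) (dot s f).

(* Main.v *)
Require Import Defs.
From Stdlib Require Import Setoid.

Theorem proposition5p4 (S : Type) (mul : S -> S -> S) (one : S)
    (E : S -> Prop) (dot : S -> S -> S)
    (Hmon : is_monoid mul one) (HE : E_setting mul one E)
    (Hdot : op_into_E E dot) :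
  (modal_left_E_monoid mul E dot <->
     right_pre_reduced mul E /\ M1 one E dot /\ M2 one dot /\ M3 mul E dot /\ M4 mul E dot)
  /\
  (forall meet : S -> S -> S,
     inductive_left_E_monoid mul E dot meet <->
       M1 one E dot /\ M2 one dot /\ M3 mul E dot /\ M4 mul E dot /\
       meet_semilattice_with mul E meet /\ M5 E dot meet).
Proof.
  destruct Hmon as [A [L R]]. destruct HE as [E1 Eid].
  unfold idempotent in Eid.
  assert (Fwd : I1' mul E dot -> right_pre_reduced mul E ->
     M1 one E dot /\ M2 one dot /\ M3 mul E dot /\ M4 mul E dot).
  { intros HI HR. split; [|split; [|split]].
    - intros e He. destruct (HI e e He) as [_ H].
      rewrite <- (L (dot e e)). apply H. rewrite L. apply Eid; auto.
    - intros s. destruct (HI s one E1) as [_ H].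
      rewrite <- (L (dot s one)). apply H. apply R.
    - intros s e He. destruct (HI s e He) as [Hd H].
      symmetry. apply H. apply Eid; auto.
    - intros s t e He.
      destruct (HI (mul s t) e He) as [Ha Ha'].
      destruct (HI t e He) as [Ht Ht'].
      destruct (HI s (dot t e) Ht) as [Hb Hb'].
      assert (K : forall x, mul x (dot (mul s t) e) = x <-> mul x (dot s (dot t e)) = x).
      { intro x. rewrite <- Ha', <- Hb', <- Ht'. rewrite !A. tauto. }
      apply HR; auto.
      + symmetry. apply K. apply Eid; auto.
      + symmetry. apply K. apply Eid; auto. }
  assert (Key1 : M1 one E dot -> M2 one dot -> M4 mul E dot ->
     forall x e, E e -> mul x e = x -> dot x e = one).
  { intros H1 H2 H4 x e He Hx. rewrite <- Hx. rewrite H4 by auto.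
    rewrite H1 by auto. apply H2. }
  assert (Key2 : M3 mul E dot -> forall x f, E f -> dot x f = one -> mul x f = x).
  { intros H3 x f Hf Hx. pose proof (H3 x f Hf) as K. rewrite Hx, !L in K. auto. }
  assert (Bwd : M1 one E dot -> M2 one dot -> M3 mul E dot -> M4 mul E dot ->
     I1' mul E dot).
  { intros H1 H2 H3 H4 t e He. split; [apply Hdot; auto|]. intro s. split.
    - intro Hs. apply Key2; auto. rewrite <- H4 by auto. apply Key1; auto.
    - intro Hs. rewrite <- Hs at 2. rewrite <- Hs at 1.
      rewrite <- !A. rewrite (A (dot t e) t e). rewrite <- H3; auto. }
  split.
  - split.
    + intros [HR HI]. split; auto.
    + intros [HR [H1 [H2 [H3 H4]]]]. split; auto.
  - intro meet. split.
    + intros [[HR HI] [HM HI2]].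
      destruct (Fwd HI HR) as [H1 [H2 [H3 H4]]].
      split; [auto|split; [auto|split; [auto|split; [auto|split; [auto|]]]]].
      destruct HM as [Mr [Mt [Ma Mg]]].
      assert (MI : forall x g h, E g -> E h ->
                 (mul x (meet g h) = x <-> mul x g = x /\ mul x h = x)).
      { intros x g h Hg Hh. destruct (Mg g h Hg Hh) as [Hm [Hmg [Hmh _]]].
        split.
        - intro Hx. split.
          + rewrite <- Hx at 1. rewrite <- A. rewrite <- Hmg. auto.
          + rewrite <- Hx at 1. rewrite <- A. rewrite <- Hmh. auto.
        - intros [Hg' Hh']. apply HI2; auto. }
      intros s e f He Hf.
      destruct (Mg e f He Hf) as [Hef _].
      assert (Hse := Hdot s e He). assert (Hsf := Hdot s f Hf).
      destruct (Mg (dot s e) (dot s f) Hse Hsf) as [Hm _].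
      assert (Hsm := Hdot s (meet e f) Hef).
      assert (K : forall x, mul x (dot s (meet e f)) = x <->
                            mul x (meet (dot s e) (dot s f)) = x).
      { intro x. rewrite MI by auto.
        destruct (HI s (meet e f) Hef) as [_ K1].
        destruct (HI s e He) as [_ K2].
        destruct (HI s f Hf) as [_ K3].
        rewrite <- K1, <- K2, <- K3. rewrite MI by auto. tauto. }
      apply Ma; auto.
      * symmetry. apply K. apply Eid; auto.
      * symmetry. apply K. apply Eid; auto.
    + intros [H1 [H2 [H3 [H4 [HM H5]]]]].
      assert (HR : right_pre_reduced mul E).
      { destruct HM as [_ [_ [Ma _]]]. intros e f He Hf h1 h2. apply Ma; auto. }
      split; [split; auto|split; auto].
      intros s e f He Hf Hse Hsf.
      destruct HM as [Mr [Mt [Ma Mg]]].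
      destruct (Mg e f He Hf) as [Hef _].
      apply Key2; auto.
      rewrite H5 by auto. rewrite !Key1 by auto.
      destruct (Mg one one E1 E1) as [_ [_ [_ G]]].
      assert (le_r mul one (meet one one)) as Hl by (apply G; auto; unfold le_r; rewrite R; auto).
      unfold le_r in Hl. rewrite L in Hl. auto.
Qed.
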